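(* Let $\{(\Gamma_t,\theta_t)\}_{t\in[0,\underline t)}$ solve the framed curvature flow, with $\kappa>0$ so that the torsion is defined. Then $$\frac{d}{dt}\int_{\Gamma_t}\tau\,ds=\frac{d}{dt}\int_{\Gamma_t}\psi_3\,ds=\int_{\Gamma_t}\big(\psi_1\psi_3\kappa+\psi_2\,\partial_s\kappa\big)\,ds .$$
   Context: $S^1=\mathbb{R}/2\pi\mathbb{Z}$; closed curves $\Gamma_t$ parametrized by $\gamma(t,\cdot):S^1\to\mathbb{R}^3$, $g=\|\partial_u\gamma\|$, $ds=g\,du$, $\partial_s=g^{-1}\partial_u$; Frenet frame $T,N,B$, curvature $\kappa$, torsion $\tau$. For an angle function $\theta\in\mathcal C^{1,2}([0,\underline t)\times S^1;S^1)$: $\nu_\theta=\cos\theta N+\sin\theta B$, $\psi_1=\kappa\cos\theta$, $\psi_2=\kappa\sin\theta$, $\psi_3=\tau+\partial_s\theta$. Framed curvature flow: $\partial_t\gamma=\kappa\nu_\theta$, $\partial_t\theta=\upsilon_\theta$ with $\upsilon_\theta\in\mathcal C^1$. *)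

(* Defs.v *)
From Stdlib Require Import Reals Lra List.
From Coquelicot Require Import Coquelicot.
Open Scope R_scope.

Definition V3 := (R * R * R)%type.
Definition mk3 (a b c : R) : V3 := (a, b, c).
Definition vx (v : V3) : R := fst (fst v).
Definition vy (v : V3) : R := snd (fst v).
Definition vz (v : V3) : R := snd v.
Definition vadd (v w : V3) : V3 := mk3 (vx v + vx w) (vy v + vy w) (vz v + vz w).
Definition vscal (a : R) (v : V3) : V3 := mk3 (a * vx v) (a * vy v) (a * vz v).
Definition dot (v w : V3) : R := vx v * vx w + vy v * vy w + vz v * vz w.
Definition cross (v w : V3) : V3 :=
  mk3 (vy v * vz w - vz v * vy w) (vz v * vx w - vx v * vz w) (vx v * vy w - vy v * vx w).
Definition vnorm (v : V3) : R := sqrt (dot v v).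

Definition du (f : R -> R -> R) : R -> R -> R := fun t u => Derive (fun v => f t v) u.
Definition dt (f : R -> R -> R) : R -> R -> R := fun t u => Derive (fun s => f s u) t.

Definition Vdu (F : R -> R -> V3) : R -> R -> V3 := fun t u =>
  mk3 (du (fun t u => vx (F t u)) t u) (du (fun t u => vy (F t u)) t u)
      (du (fun t u => vz (F t u)) t u).
Definition Vdt (F : R -> R -> V3) : R -> R -> V3 := fun t u =>
  mk3 (dt (fun t u => vx (F t u)) t u) (dt (fun t u => vy (F t u)) t u)
      (dt (fun t u => vz (F t u)) t u).

Fixpoint pd (w : list bool) (f : R -> R -> R) : R -> R -> R :=
  match w with
  | nil => f
  | b :: w' => if b then dt (pd w' f) else du (pd w' f)
  end.

Definition smooth_on (D : R -> R -> Prop) (f : R -> R -> R) : Prop :=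
  forall (w : list bool) (t u : R), D t u ->
    continuous (fun p : R * R => pd w f (fst p) (snd p)) (t, u) /\
    ex_derive (fun s => pd w f s u) t /\
    ex_derive (fun v => pd w f t v) u.

Definition Vsmooth_on (D : R -> R -> Prop) (F : R -> R -> V3) : Prop :=
  smooth_on D (fun t u => vx (F t u)) /\ smooth_on D (fun t u => vy (F t u)) /\
  smooth_on D (fun t u => vz (F t u)).

(** Geometry of the curves Gamma_t parametrized by gam(t, .) : R -> R^3
    (2*PI-periodic, i.e. S^1 = R / 2 PI Z). *)
Section Geometry.
Variable gam : R -> R -> V3.

Definition speed (t u : R) : R := vnorm (Vdu gam t u).
Definition ds (f : R -> R -> R) : R -> R -> R := fun t u => du f t u / speed t u.
Definition Vds (F : R -> R -> V3) : R -> R -> V3 := fun t u => vscal (/ speed t u) (Vdu F t u).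

Definition Tg : R -> R -> V3 := Vds gam.
Definition kappa (t u : R) : R := vnorm (Vds Tg t u).
Definition Ng (t u : R) : V3 := vscal (/ kappa t u) (Vds Tg t u).
Definition Bg (t u : R) : V3 := cross (Tg t u) (Ng t u).
Definition tau (t u : R) : R := dot (Vds Ng t u) (Bg t u).

Variable theta : R -> R -> R.
Definition nu_theta (t u : R) : V3 :=
  vadd (vscal (cos (theta t u)) (Ng t u)) (vscal (sin (theta t u)) (Bg t u)).
Definition psi1 (t u : R) : R := kappa t u * cos (theta t u).
Definition psi2 (t u : R) : R := kappa t u * sin (theta t u).
Definition psi3 (t u : R) : R := tau t u + ds theta t u.

Definition curve_int (f : R -> R -> R) (t : R) : R :=
  RInt (fun u => f t u * speed t u) 0 (2 * PI).
End Geometry.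

(* Main.v *)
Require Import Defs.
From Stdlib Require Import Reals Lra Lia List ZArith.
From Coquelicot Require Import Coquelicot.
Open Scope R_scope.

Lemma isd_plus (f g : R -> R) x df dg :
  is_derive f x df -> is_derive g x dg -> is_derive (fun v => f v + g v) x (df + dg).
Proof. intros; exact (is_derive_plus f g x df dg H H0). Qed.

Lemma isd_mult (f g : R -> R) x df dg :
  is_derive f x df -> is_derive g x dg -> is_derive (fun v => f v * g v) x (df * g x + f x * dg).
Proof. intros. exact (is_derive_mult f g x df dg H H0 Rmult_comm). Qed.

Lemma isd_opp (f : R -> R) x df :
  is_derive f x df -> is_derive (fun v => - f v) x (- df).
Proof. intros. exact (is_derive_opp f x df H). Qed.

Lemma isd_const (c x : R) : is_derive (fun _ => c) x 0.
Proof. exact (is_derive_const c x). Qed.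

Lemma isd_sin (f : R -> R) x df : is_derive f x df -> is_derive (fun v => sin (f v)) x (df * cos (f x)).
Proof. intros. exact (is_derive_comp sin f x (cos (f x)) df (is_derive_sin _) H). Qed.

Lemma isd_cos (f : R -> R) x df : is_derive f x df -> is_derive (fun v => cos (f v)) x (df * - sin (f x)).
Proof. intros. exact (is_derive_comp cos f x (- sin (f x)) df (is_derive_cos _) H). Qed.

Lemma isd_inv (f : R -> R) x df : is_derive f x df -> f x <> 0 ->
  is_derive (fun v => / f v) x (- df * (/ f x * / f x)).
Proof. intros. replace (- df * (/ f x * / f x)) with (- df / f x ^ 2) by (field; auto).
  now apply is_derive_inv. Qed.

Lemma isd_sqrt (f : R -> R) x df : is_derive f x df -> 0 < f x ->
  is_derive (fun v => sqrt (f v)) x (df * / (2 * sqrt (f x))).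
Proof. intros. exact (is_derive_sqrt f x df H H0). Qed.

Lemma Derive_isd f x df : is_derive f x df -> Derive f x = df.
Proof. apply is_derive_unique. Qed.

Lemma isd_ex f x : ex_derive f x -> is_derive f x (Derive f x).
Proof. apply Derive_correct. Qed.

Section Sm.
Variables a b : R.
Definition DD (t : R) : Prop := a < t < b.

Lemma DD_l2 (P : R -> R -> Prop) t u :
  (forall s v, DD s -> P s v) -> DD t -> locally_2d P t u.
Proof.
  intros HP [H1 H2]. assert (Hp : 0 < Rmin (t - a) (b - t)) by (apply Rmin_pos; lra).
  exists (mkposreal _ Hp). intros s v Hs _. apply HP. simpl in Hs.
  apply Rabs_lt_between' in Hs. destruct Hs as [Hs1 Hs2].
  pose proof (Rmin_l (t-a) (b-t)); pose proof (Rmin_r (t-a) (b-t)). split; lra.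
Qed.

Lemma DD_loc t : DD t -> locally t DD.
Proof.
  intros Ht. apply (locally_2d_1d_const_y (fun s v => DD s) t 0). now apply DD_l2.
Qed.

Lemma DD_loc2 (P : R -> R -> Prop) t u : (forall s v, DD s -> P s v) -> DD t ->
  locally (t, u) (fun p : R * R => P (fst p) (snd p)).
Proof. intros. apply locally_2d_locally. now apply DD_l2. Qed.

Definition cont2 (f : R -> R -> R) (t u : R) : Prop :=
  continuous (fun p : R * R => f (fst p) (snd p)) (t, u).

Fixpoint Ck (n : nat) (f : R -> R -> R) : Prop :=
  match n with
  | O => forall t u, DD t -> cont2 f t u
  | S m => (forall t u, DD t -> cont2 f t u /\ ex_derive (fun s => f s u) t /\
                              ex_derive (fun v => f t v) u)
           /\ Ck m (dt f) /\ Ck m (du f)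
  end.

Definition Sm f := forall n, Ck n f.

Lemma Ck_cont n f t u : Ck n f -> DD t -> cont2 f t u.
Proof. destruct n; simpl; intros H Ht. now apply H. now apply H. Qed.

Lemma Ck_down n : forall f, Ck (S n) f -> Ck n f.
Proof.
  induction n; intros f H.
  - simpl. intros. now apply H.
  - destruct H as [H0 [H1 H2]]. split; [exact H0|]. split; now apply IHn.
Qed.

Lemma Ck_ext n : forall f g, (forall t u, DD t -> f t u = g t u) -> Ck n f -> Ck n g.
Proof.
  induction n; intros f g E H.
  - simpl. intros t u Ht. unfold cont2.
    apply (continuous_ext_loc (fun p : R * R => g (fst p) (snd p)) (fun p : R * R => f (fst p) (snd p))).
    + apply (DD_loc2 (fun s v => f s v = g s v)); auto.
    + now apply H.
  - destruct H as [H0 [H1 H2]]. split; [|split].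
    + intros t u Ht. destruct (H0 t u Ht) as [C [E1 E2]]. split; [|split].
      * apply (continuous_ext_loc (fun p : R * R => g (fst p) (snd p)) (fun p : R * R => f (fst p) (snd p))).
        apply (DD_loc2 (fun s v => f s v = g s v)); auto. exact C.
      * apply (ex_derive_ext_loc (fun s => f s u)); auto.
        apply (filter_imp DD); [|now apply DD_loc]. intros; auto.
      * apply (ex_derive_ext_loc (fun v => f t v)); auto.
        apply filter_forall. intros; auto.
    + apply (IHn (dt f)); auto. intros t u Ht. unfold dt.
      apply Derive_ext_loc. apply (filter_imp DD); [|now apply DD_loc]. intros; auto.
    + apply (IHn (du f)); auto. intros t u Ht. unfold du.
      apply Derive_ext. intros; auto.
Qed.

Lemma Sm_ext f g : (forall t u, DD t -> f t u = g t u) -> Sm f -> Sm g.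
Proof. intros E H n. apply (Ck_ext n f); auto. Qed.

Lemma Sm_dt f : Sm f -> Sm (dt f).
Proof. intros H n. apply (H (S n)). Qed.
Lemma Sm_du f : Sm f -> Sm (du f).
Proof. intros H n. apply (H (S n)). Qed.
Lemma Sm_cont f t u : Sm f -> DD t -> cont2 f t u.
Proof. intros H. apply (Ck_cont 0); apply H. Qed.
Lemma Sm_ext_t f t u : Sm f -> DD t -> ex_derive (fun s => f s u) t.
Proof. intros H Ht. apply (proj1 (H 1%nat) t u Ht). Qed.
Lemma Sm_ext_u f t u : Sm f -> DD t -> ex_derive (fun v => f t v) u.
Proof. intros H Ht. apply (proj1 (H 1%nat) t u Ht). Qed.

Lemma smooth_Sm f : smooth_on (fun t _ => a < t < b) f -> Sm f.
Proof.
  intros H n. cut (forall w, Ck n (pd w f)). { intros C. apply (C nil). }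
  induction n; intros w.
  - simpl. intros t u Ht. apply (H w t u Ht).
  - split; [|split].
    + intros t u Ht. apply (H w t u Ht).
    + apply (IHn (true :: w)).
    + apply (IHn (false :: w)).
Qed.
End Sm.

Lemma cont2_plus f g t u : cont2 f t u -> cont2 g t u -> cont2 (fun t u => f t u + g t u) t u.
Proof. intros; unfold cont2. exact (continuous_plus (fun p : R*R => f (fst p) (snd p)) (fun p : R*R => g (fst p) (snd p)) (t,u) H H0). Qed.
Lemma cont2_mult f g t u : cont2 f t u -> cont2 g t u -> cont2 (fun t u => f t u * g t u) t u.
Proof. intros; unfold cont2. exact (continuous_mult (fun p : R*R => f (fst p) (snd p)) (fun p : R*R => g (fst p) (snd p)) (t,u) H H0). Qed.
Lemma cont2_const c t u : cont2 (fun _ _ => c) t u.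
Proof. unfold cont2. apply continuous_const. Qed.
Lemma cont2_comp (phi : R -> R) f t u : cont2 f t u -> ex_derive phi (f t u) ->
  cont2 (fun t u => phi (f t u)) t u.
Proof. intros. unfold cont2. exact (continuous_comp (fun p : R*R => f (fst p) (snd p)) phi (t,u) H (ex_derive_continuous phi _ H0)). Qed.

Lemma exd_plus (f g : R->R) x : ex_derive f x -> ex_derive g x -> ex_derive (fun v => f v + g v) x.
Proof. intros. eexists. apply (isd_plus f g); apply isd_ex; auto. Qed.
Lemma exd_mult (f g : R->R) x : ex_derive f x -> ex_derive g x -> ex_derive (fun v => f v * g v) x.
Proof. intros. eexists. apply (isd_mult f g); apply isd_ex; auto. Qed.
Lemma exd_inv (f : R->R) x : ex_derive f x -> f x <> 0 -> ex_derive (fun v => / f v) x.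
Proof. intros. eexists. apply (isd_inv f); auto; apply isd_ex; auto. Qed.
Lemma exd_sqrt (f : R->R) x : ex_derive f x -> 0 < f x -> ex_derive (fun v => sqrt (f v)) x.
Proof. intros. eexists. apply (isd_sqrt f); auto; apply isd_ex; auto. Qed.
Lemma exd_sin (f : R->R) x : ex_derive f x -> ex_derive (fun v => sin (f v)) x.
Proof. intros. eexists. apply (isd_sin f); auto; apply isd_ex; auto. Qed.
Lemma exd_cos (f : R->R) x : ex_derive f x -> ex_derive (fun v => cos (f v)) x.
Proof. intros. eexists. apply (isd_cos f); auto; apply isd_ex; auto. Qed.

Lemma dt_plus f g t u : ex_derive (fun s => f s u) t -> ex_derive (fun s => g s u) t ->
  dt (fun t u => f t u + g t u) t u = dt f t u + dt g t u.
Proof. intros. unfold dt. apply Derive_isd. apply (isd_plus (fun s => f s u) (fun s => g s u)); now apply isd_ex. Qed.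
Lemma du_plus f g t u : ex_derive (fun v => f t v) u -> ex_derive (fun v => g t v) u ->
  du (fun t u => f t u + g t u) t u = du f t u + du g t u.
Proof. intros. unfold du. apply Derive_isd. apply (isd_plus (fun v => f t v) (fun v => g t v)); now apply isd_ex. Qed.
Lemma dt_mult f g t u : ex_derive (fun s => f s u) t -> ex_derive (fun s => g s u) t ->
  dt (fun t u => f t u * g t u) t u = dt f t u * g t u + f t u * dt g t u.
Proof. intros. unfold dt. apply Derive_isd. apply (isd_mult (fun s => f s u) (fun s => g s u)); now apply isd_ex. Qed.
Lemma du_mult f g t u : ex_derive (fun v => f t v) u -> ex_derive (fun v => g t v) u ->
  du (fun t u => f t u * g t u) t u = du f t u * g t u + f t u * du g t u.
Proof. intros. unfold du. apply Derive_isd. apply (isd_mult (fun v => f t v) (fun v => g t v)); now apply isd_ex. Qed.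
Lemma dt_inv f t u : ex_derive (fun s => f s u) t -> f t u <> 0 ->
  dt (fun t u => / f t u) t u = - dt f t u * (/ f t u * / f t u).
Proof. intros. unfold dt. apply Derive_isd. apply (isd_inv (fun s => f s u)); auto; now apply isd_ex. Qed.
Lemma du_inv f t u : ex_derive (fun v => f t v) u -> f t u <> 0 ->
  du (fun t u => / f t u) t u = - du f t u * (/ f t u * / f t u).
Proof. intros. unfold du. apply Derive_isd. apply (isd_inv (fun v => f t v)); auto; now apply isd_ex. Qed.
Lemma dt_sqrt f t u : ex_derive (fun s => f s u) t -> 0 < f t u ->
  dt (fun t u => sqrt (f t u)) t u = dt f t u * / (2 * sqrt (f t u)).
Proof. intros. unfold dt. apply Derive_isd. apply (isd_sqrt (fun s => f s u)); auto; now apply isd_ex. Qed.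
Lemma du_sqrt f t u : ex_derive (fun v => f t v) u -> 0 < f t u ->
  du (fun t u => sqrt (f t u)) t u = du f t u * / (2 * sqrt (f t u)).
Proof. intros. unfold du. apply Derive_isd. apply (isd_sqrt (fun v => f t v)); auto; now apply isd_ex. Qed.
Lemma dt_sin f t u : ex_derive (fun s => f s u) t ->
  dt (fun t u => sin (f t u)) t u = dt f t u * cos (f t u).
Proof. intros. unfold dt. apply Derive_isd. apply (isd_sin (fun s => f s u)); auto; now apply isd_ex. Qed.
Lemma du_sin f t u : ex_derive (fun v => f t v) u ->
  du (fun t u => sin (f t u)) t u = du f t u * cos (f t u).
Proof. intros. unfold du. apply Derive_isd. apply (isd_sin (fun v => f t v)); auto; now apply isd_ex. Qed.
Lemma dt_cos f t u : ex_derive (fun s => f s u) t ->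
  dt (fun t u => cos (f t u)) t u = dt f t u * - sin (f t u).
Proof. intros. unfold dt. apply Derive_isd. apply (isd_cos (fun s => f s u)); auto; now apply isd_ex. Qed.
Lemma du_cos f t u : ex_derive (fun v => f t v) u ->
  du (fun t u => cos (f t u)) t u = du f t u * - sin (f t u).
Proof. intros. unfold du. apply Derive_isd. apply (isd_cos (fun v => f t v)); auto; now apply isd_ex. Qed.
Lemma dt_const c t u : dt (fun _ _ => c) t u = 0.
Proof. unfold dt. apply Derive_const. Qed.
Lemma du_const c t u : du (fun _ _ => c) t u = 0.
Proof. unfold du. apply Derive_const. Qed.

Section Clos.
Variables a b : R.
Local Notation DD := (DD a b).
Local Notation Ck := (Ck a b).
Local Notation Sm := (Sm a b).

Lemma Ck_const n : forall c, Ck n (fun _ _ => c).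
Proof.
  induction n; intros c.
  - intros t u _. apply cont2_const.
  - split; [|split].
    + intros t u _. split; [apply cont2_const|]. split; apply ex_derive_const.
    + apply (Ck_ext a b n (fun _ _ => 0)); [|apply IHn]. intros t u _. now rewrite dt_const.
    + apply (Ck_ext a b n (fun _ _ => 0)); [|apply IHn]. intros t u _. now rewrite du_const.
Qed.

Lemma Ck_plus n : forall f g, Ck n f -> Ck n g -> Ck n (fun t u => f t u + g t u).
Proof.
  induction n; intros f g Hf Hg.
  - intros t u Ht. apply cont2_plus; auto.
  - destruct Hf as [F0 [F1 F2]]; destruct Hg as [G0 [G1 G2]]. split; [|split].
    + intros t u Ht. destruct (F0 t u Ht) as [? [? ?]]; destruct (G0 t u Ht) as [? [? ?]].
      split; [now apply cont2_plus|]. split; [apply (exd_plus (fun s => f s u) (fun s => g s u)) | apply (exd_plus (fun s => f t s) (fun s => g t s))]; auto.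
    + apply (Ck_ext a b n (fun t u => dt f t u + dt g t u)); [|now apply IHn].
      intros t u Ht. symmetry. apply (dt_plus f g); destruct (F0 t u Ht) as [? [? ?]]; destruct (G0 t u Ht) as [? [? ?]]; assumption.
    + apply (Ck_ext a b n (fun t u => du f t u + du g t u)); [|now apply IHn].
      intros t u Ht. symmetry. apply (du_plus f g); destruct (F0 t u Ht) as [? [? ?]]; destruct (G0 t u Ht) as [? [? ?]]; assumption.
Qed.

Lemma Ck_mult n : forall f g, Ck n f -> Ck n g -> Ck n (fun t u => f t u * g t u).
Proof.
  induction n; intros f g Hf Hg.
  - intros t u Ht. apply cont2_mult; auto.
  - pose proof (Ck_down a b n f Hf) as Df. pose proof (Ck_down a b n g Hg) as Dg.
    destruct Hf as [F0 [F1 F2]]; destruct Hg as [G0 [G1 G2]]. split; [|split].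
    + intros t u Ht. destruct (F0 t u Ht) as [? [? ?]]; destruct (G0 t u Ht) as [? [? ?]].
      split; [now apply cont2_mult|]. split; [apply (exd_mult (fun s => f s u) (fun s => g s u)) | apply (exd_mult (fun s => f t s) (fun s => g t s))]; auto.
    + apply (Ck_ext a b n (fun t u => dt f t u * g t u + f t u * dt g t u)).
      * intros t u Ht. symmetry. apply (dt_mult f g); destruct (F0 t u Ht) as [? [? ?]]; destruct (G0 t u Ht) as [? [? ?]]; assumption.
      * apply Ck_plus; apply IHn; auto.
    + apply (Ck_ext a b n (fun t u => du f t u * g t u + f t u * du g t u)).
      * intros t u Ht. symmetry. apply (du_mult f g); destruct (F0 t u Ht) as [? [? ?]]; destruct (G0 t u Ht) as [? [? ?]]; assumption.
      * apply Ck_plus; apply IHn; auto.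
Qed.

Lemma Ck_opp n f : Ck n f -> Ck n (fun t u => - f t u).
Proof. intros H. apply (Ck_ext a b n (fun t u => (-1) * f t u)). intros; ring.
  apply (Ck_mult n (fun _ _ => -1) f); auto. apply Ck_const. Qed.

Lemma Ck_inv n : forall f, Ck n f -> (forall t u, DD t -> f t u <> 0) -> Ck n (fun t u => / f t u).
Proof.
  induction n; intros f Hf Hnz.
  - intros t u Ht. apply (cont2_comp Rinv f). now apply Hf.
    eexists. apply (is_derive_inv (fun x => x)). apply is_derive_id. now apply Hnz.
  - pose proof (Ck_down a b n f Hf) as Df. pose proof (IHn f Df Hnz) as Iv.
    destruct Hf as [F0 [F1 F2]]. split; [|split].
    + intros t u Ht. destruct (F0 t u Ht) as [? [? ?]]. split.
      * apply (cont2_comp Rinv f); auto. eexists. apply (is_derive_inv (fun x => x)). apply is_derive_id. now apply Hnz.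
      * split; [apply (exd_inv (fun s => f s u)) | apply (exd_inv (fun s => f t s))]; auto.
    + apply (Ck_ext a b n (fun t u => - dt f t u * (/ f t u * / f t u))).
      * intros t u Ht. symmetry. apply dt_inv; auto; destruct (F0 t u Ht) as [? [? ?]]; assumption.
      * apply (Ck_mult n (fun t u => - dt f t u)). apply Ck_opp; auto. apply Ck_mult; auto.
    + apply (Ck_ext a b n (fun t u => - du f t u * (/ f t u * / f t u))).
      * intros t u Ht. symmetry. apply du_inv; auto; destruct (F0 t u Ht) as [? [? ?]]; assumption.
      * apply (Ck_mult n (fun t u => - du f t u)). apply Ck_opp; auto. apply Ck_mult; auto.
Qed.

Lemma Ck_sqrt n : forall f, Ck n f -> (forall t u, DD t -> 0 < f t u) -> Ck n (fun t u => sqrt (f t u)).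
Proof.
  induction n; intros f Hf Hp.
  - intros t u Ht. apply (cont2_comp sqrt f). now apply Hf.
    eexists. apply (is_derive_sqrt (fun x => x)). apply is_derive_id. now apply Hp.
  - pose proof (Ck_down a b n f Hf) as Df. pose proof (IHn f Df Hp) as Iv.
    assert (Iv2 : Ck n (fun t u => / (2 * sqrt (f t u)))).
    { apply (Ck_inv n (fun t u => 2 * sqrt (f t u))). apply (Ck_mult n (fun _ _ => 2)); auto. apply Ck_const.
      intros t u Ht. pose proof (sqrt_lt_R0 _ (Hp t u Ht)). lra. }
    destruct Hf as [F0 [F1 F2]]. split; [|split].
    + intros t u Ht. destruct (F0 t u Ht) as [? [? ?]]. split.
      * apply (cont2_comp sqrt f); auto. eexists. apply (is_derive_sqrt (fun x => x)). apply is_derive_id. now apply Hp.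
      * split; [apply (exd_sqrt (fun s => f s u)) | apply (exd_sqrt (fun s => f t s))]; auto.
    + apply (Ck_ext a b n (fun t u => dt f t u * / (2 * sqrt (f t u)))).
      * intros t u Ht. symmetry. apply dt_sqrt; auto; destruct (F0 t u Ht) as [? [? ?]]; assumption.
      * apply (Ck_mult n (dt f)); auto.
    + apply (Ck_ext a b n (fun t u => du f t u * / (2 * sqrt (f t u)))).
      * intros t u Ht. symmetry. apply du_sqrt; auto; destruct (F0 t u Ht) as [? [? ?]]; assumption.
      * apply (Ck_mult n (du f)); auto.
Qed.

Lemma Ck_sincos n : forall f, Ck n f -> Ck n (fun t u => sin (f t u)) /\ Ck n (fun t u => cos (f t u)).
Proof.
  induction n; intros f Hf.
  - split; intros t u Ht; apply cont2_comp; auto; eexists; [apply is_derive_sin|apply is_derive_cos].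
  - pose proof (Ck_down a b n f Hf) as Df. destruct (IHn f Df) as [Is Ic].
    destruct Hf as [F0 [F1 F2]]. split; split; [| split | | split].
    + intros t u Ht. destruct (F0 t u Ht) as [? [? ?]]. split.
      * apply cont2_comp; auto. eexists; apply is_derive_sin.
      * split; [apply (exd_sin (fun s => f s u)) | apply (exd_sin (fun s => f t s))]; auto.
    + apply (Ck_ext a b n (fun t u => dt f t u * cos (f t u))).
      * intros t u Ht. symmetry. apply dt_sin. destruct (F0 t u Ht) as [? [? ?]]; assumption.
      * apply (Ck_mult n (dt f)); auto.
    + apply (Ck_ext a b n (fun t u => du f t u * cos (f t u))).
      * intros t u Ht. symmetry. apply du_sin. destruct (F0 t u Ht) as [? [? ?]]; assumption.
      * apply (Ck_mult n (du f)); auto.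
    + intros t u Ht. destruct (F0 t u Ht) as [? [? ?]]. split.
      * apply cont2_comp; auto. eexists; apply is_derive_cos.
      * split; [apply (exd_cos (fun s => f s u)) | apply (exd_cos (fun s => f t s))]; auto.
    + apply (Ck_ext a b n (fun t u => dt f t u * - sin (f t u))).
      * intros t u Ht. symmetry. apply dt_cos. destruct (F0 t u Ht) as [? [? ?]]; assumption.
      * apply (Ck_mult n (dt f)); auto. apply (Ck_opp n (fun t u => sin (f t u))); auto.
    + apply (Ck_ext a b n (fun t u => du f t u * - sin (f t u))).
      * intros t u Ht. symmetry. apply du_cos. destruct (F0 t u Ht) as [? [? ?]]; assumption.
      * apply (Ck_mult n (du f)); auto. apply (Ck_opp n (fun t u => sin (f t u))); auto.
Qed.

Lemma Sm_const c : Sm (fun _ _ => c).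
Proof. intros n; apply Ck_const. Qed.
Lemma Sm_plus f g : Sm f -> Sm g -> Sm (fun t u => f t u + g t u).
Proof. intros; intros n; apply Ck_plus; auto. Qed.
Lemma Sm_mult f g : Sm f -> Sm g -> Sm (fun t u => f t u * g t u).
Proof. intros; intros n; apply Ck_mult; auto. Qed.
Lemma Sm_opp f : Sm f -> Sm (fun t u => - f t u).
Proof. intros; intros n; apply Ck_opp; auto. Qed.
Lemma Sm_minus f g : Sm f -> Sm g -> Sm (fun t u => f t u - g t u).
Proof. intros. apply (Sm_plus f (fun t u => - g t u)); auto. apply Sm_opp; auto. Qed.
Lemma Sm_inv f : Sm f -> (forall t u, DD t -> f t u <> 0) -> Sm (fun t u => / f t u).
Proof. intros; intros n; apply Ck_inv; auto. Qed.
Lemma Sm_sqrt f : Sm f -> (forall t u, DD t -> 0 < f t u) -> Sm (fun t u => sqrt (f t u)).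
Proof. intros; intros n; apply Ck_sqrt; auto. Qed.
Lemma Sm_sin f : Sm f -> Sm (fun t u => sin (f t u)).
Proof. intros H n; apply Ck_sincos; auto. Qed.
Lemma Sm_cos f : Sm f -> Sm (fun t u => cos (f t u)).
Proof. intros H n; apply Ck_sincos; auto. Qed.

Lemma Sm_schwarz f t u : Sm f -> DD t -> dt (du f) t u = du (dt f) t u.
Proof.
  intros H Ht. unfold dt, du.
  apply Schwarz.
  - apply (DD_l2 a b); auto. intros s v Hs. split; [|split; [|split]].
    + apply (Sm_ext_t a b); auto.
    + apply (Sm_ext_u a b); auto.
    + apply (Sm_ext_t a b (du f)); auto. apply Sm_du; auto.
    + apply (Sm_ext_u a b (dt f)); auto. apply Sm_dt; auto.
  - apply continuity_2d_pt_filterlim. apply (Sm_cont a b (dt (du f))); auto.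
    apply Sm_dt, Sm_du, H.
  - apply continuity_2d_pt_filterlim. apply (Sm_cont a b (du (dt f))); auto.
    apply Sm_du, Sm_dt, H.
Qed.
End Clos.

Definition VD (F : R -> V3) (x : R) : V3 :=
  mk3 (Derive (fun v => vx (F v)) x) (Derive (fun v => vy (F v)) x) (Derive (fun v => vz (F v)) x).
Definition isV (F : R -> V3) (x : R) (dF : V3) : Prop :=
  is_derive (fun v => vx (F v)) x (vx dF) /\ is_derive (fun v => vy (F v)) x (vy dF) /\
  is_derive (fun v => vz (F v)) x (vz dF).
Definition exV (F : R -> V3) (x : R) : Prop :=
  ex_derive (fun v => vx (F v)) x /\ ex_derive (fun v => vy (F v)) x /\
  ex_derive (fun v => vz (F v)) x.

Lemma V3_eta v : mk3 (vx v) (vy v) (vz v) = v.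
Proof. destruct v as [[x y] z]. reflexivity. Qed.

Lemma V3_ext v w : vx v = vx w -> vy v = vy w -> vz v = vz w -> v = w.
Proof. destruct v as [[x y] z]; destruct w as [[x' y'] z']. unfold vx, vy, vz; simpl. intros; subst; auto. Qed.

Lemma isV_VD F x : exV F x -> isV F x (VD F x).
Proof. intros [H1 [H2 H3]]. split; [|split]; simpl; apply isd_ex; auto. Qed.
Lemma VD_isV F x dF : isV F x dF -> VD F x = dF.
Proof. intros [H1 [H2 H3]]. apply V3_ext; simpl; apply Derive_isd; auto. Qed.

Lemma isd_val (f : R -> R) (x l l' : R) : is_derive f x l -> l = l' -> is_derive f x l'.
Proof. intros H ->; auto. Qed.

Lemma isd_dot F G x dF dG : isV F x dF -> isV G x dG ->
  is_derive (fun v => dot (F v) (G v)) x (dot dF (G x) + dot (F x) dG).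
Proof.
  intros [F1 [F2 F3]] [G1 [G2 G3]]. unfold dot.
  eapply isd_val.
  apply (isd_plus (fun v => vx (F v) * vx (G v) + vy (F v) * vy (G v)) (fun v => vz (F v) * vz (G v))).
  apply (isd_plus (fun v => vx (F v) * vx (G v)) (fun v => vy (F v) * vy (G v))).
  apply (isd_mult (fun v => vx (F v)) (fun v => vx (G v))); eauto.
  apply (isd_mult (fun v => vy (F v)) (fun v => vy (G v))); eauto.
  apply (isd_mult (fun v => vz (F v)) (fun v => vz (G v))); eauto.
  ring.
Qed.

Lemma isV_scal (a : R -> R) F x da dF : is_derive a x da -> isV F x dF ->
  isV (fun v => vscal (a v) (F v)) x (vadd (vscal da (F x)) (vscal (a x) dF)).
Proof.
  intros Ha [F1 [F2 F3]]. unfold vscal, vadd, mk3, vx, vy, vz in *; simpl in *.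
  split; [|split].
  - apply (isd_mult a (fun v => fst (fst (F v)))); auto.
  - apply (isd_mult a (fun v => snd (fst (F v)))); auto.
  - apply (isd_mult a (fun v => snd (F v))); auto.
Qed.

Lemma isV_add F G x dF dG : isV F x dF -> isV G x dG ->
  isV (fun v => vadd (F v) (G v)) x (vadd dF dG).
Proof.
  intros [F1 [F2 F3]] [G1 [G2 G3]]. unfold vadd, mk3, vx, vy, vz in *; simpl in *.
  split; [|split].
  - apply (isd_plus (fun v => fst (fst (F v))) (fun v => fst (fst (G v)))); auto.
  - apply (isd_plus (fun v => snd (fst (F v))) (fun v => snd (fst (G v)))); auto.
  - apply (isd_plus (fun v => snd (F v)) (fun v => snd (G v))); auto.
Qed.

Lemma isd_minus (f g : R -> R) x df dg :
  is_derive f x df -> is_derive g x dg -> is_derive (fun v => f v - g v) x (df - dg).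
Proof. intros. apply (isd_plus f (fun v => - g v)); auto. apply (isd_opp g); auto. Qed.

Lemma isV_cross F G x dF dG : isV F x dF -> isV G x dG ->
  isV (fun v => cross (F v) (G v)) x (vadd (cross dF (G x)) (cross (F x) dG)).
Proof.
  intros [F1 [F2 F3]] [G1 [G2 G3]]. split; [|split].
  - refine (isd_val _ _ _ _ (isd_minus _ _ _ _ _ (isd_mult (fun v => vy (F v)) (fun v => vz (G v)) _ _ _ F2 G3) (isd_mult (fun v => vz (F v)) (fun v => vy (G v)) _ _ _ F3 G2)) _).
    unfold cross, vadd, mk3, vx, vy, vz; simpl; ring.
  - refine (isd_val _ _ _ _ (isd_minus _ _ _ _ _ (isd_mult (fun v => vz (F v)) (fun v => vx (G v)) _ _ _ F3 G1) (isd_mult (fun v => vx (F v)) (fun v => vz (G v)) _ _ _ F1 G3)) _).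
    unfold cross, vadd, mk3, vx, vy, vz; simpl; ring.
  - refine (isd_val _ _ _ _ (isd_minus _ _ _ _ _ (isd_mult (fun v => vx (F v)) (fun v => vy (G v)) _ _ _ F1 G2) (isd_mult (fun v => vy (F v)) (fun v => vx (G v)) _ _ _ F2 G1)) _).
    unfold cross, vadd, mk3, vx, vy, vz; simpl; ring.
Qed.

Section VSm.
Variables a b : R.
Local Notation DD := (DD a b).
Local Notation Sm := (Sm a b).

Definition VSm (F : R -> R -> V3) : Prop :=
  Sm (fun t u => vx (F t u)) /\ Sm (fun t u => vy (F t u)) /\ Sm (fun t u => vz (F t u)).

Lemma VSm_Vdu F : VSm F -> VSm (Vdu F).
Proof. intros [H1 [H2 H3]]. split; [|split]; apply Sm_du; auto. Qed.
Lemma VSm_Vdt F : VSm F -> VSm (Vdt F).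
Proof. intros [H1 [H2 H3]]. split; [|split]; apply Sm_dt; auto. Qed.

Lemma VSm_scal (c : R -> R -> R) F : Sm c -> VSm F -> VSm (fun t u => vscal (c t u) (F t u)).
Proof. intros Hc [H1 [H2 H3]]. split; [|split]; simpl.
  apply (Sm_mult a b c (fun t u => vx (F t u))); auto.
  apply (Sm_mult a b c (fun t u => vy (F t u))); auto.
  apply (Sm_mult a b c (fun t u => vz (F t u))); auto. Qed.

Lemma VSm_add F G : VSm F -> VSm G -> VSm (fun t u => vadd (F t u) (G t u)).
Proof. intros [H1 [H2 H3]] [G1 [G2 G3]]. split; [|split]; simpl.
  apply (Sm_plus a b (fun t u => vx (F t u)) (fun t u => vx (G t u))); auto.
  apply (Sm_plus a b (fun t u => vy (F t u)) (fun t u => vy (G t u))); auto.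
  apply (Sm_plus a b (fun t u => vz (F t u)) (fun t u => vz (G t u))); auto. Qed.

Lemma VSm_cross F G : VSm F -> VSm G -> VSm (fun t u => cross (F t u) (G t u)).
Proof. intros [H1 [H2 H3]] [G1 [G2 G3]]. unfold cross; split; [|split]; simpl.
  apply (Sm_minus a b (fun t u => vy (F t u) * vz (G t u)) (fun t u => vz (F t u) * vy (G t u)));
    [apply (Sm_mult a b (fun t u => vy (F t u))) | apply (Sm_mult a b (fun t u => vz (F t u)))]; auto.
  apply (Sm_minus a b (fun t u => vz (F t u) * vx (G t u)) (fun t u => vx (F t u) * vz (G t u)));
    [apply (Sm_mult a b (fun t u => vz (F t u))) | apply (Sm_mult a b (fun t u => vx (F t u)))]; auto.
  apply (Sm_minus a b (fun t u => vx (F t u) * vy (G t u)) (fun t u => vy (F t u) * vx (G t u)));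
    [apply (Sm_mult a b (fun t u => vx (F t u))) | apply (Sm_mult a b (fun t u => vy (F t u)))]; auto.
Qed.

Lemma Sm_dot F G : VSm F -> VSm G -> Sm (fun t u => dot (F t u) (G t u)).
Proof. intros [H1 [H2 H3]] [G1 [G2 G3]]. unfold dot.
  apply (Sm_plus a b (fun t u => vx (F t u) * vx (G t u) + vy (F t u) * vy (G t u))).
  apply (Sm_plus a b (fun t u => vx (F t u) * vx (G t u))).
  apply (Sm_mult a b (fun t u => vx (F t u))); auto.
  apply (Sm_mult a b (fun t u => vy (F t u))); auto.
  apply (Sm_mult a b (fun t u => vz (F t u))); auto.
Qed.

Lemma Sm_vnorm F : VSm F -> (forall t u, DD t -> 0 < dot (F t u) (F t u)) ->
  Sm (fun t u => vnorm (F t u)).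
Proof. intros H Hp. unfold vnorm. apply (Sm_sqrt a b (fun t u => dot (F t u) (F t u))); auto.
  apply Sm_dot; auto. Qed.

Lemma VSm_exV_u F t u : VSm F -> DD t -> exV (fun v => F t v) u.
Proof. intros [H1 [H2 H3]] Ht. split; [|split]; apply (Sm_ext_u a b (fun t u => _ (F t u))); auto. Qed.
Lemma VSm_exV_t F t u : VSm F -> DD t -> exV (fun s => F s u) t.
Proof. intros [H1 [H2 H3]] Ht. split; [|split]; apply (Sm_ext_t a b (fun t u => _ (F t u))); auto. Qed.

Lemma VSm_schwarz F t u : VSm F -> DD t -> Vdt (Vdu F) t u = Vdu (Vdt F) t u.
Proof. intros [H1 [H2 H3]] Ht. apply V3_ext; simpl;
  apply (Sm_schwarz a b (fun t u => _ (F t u))); auto. Qed.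
End VSm.

Ltac vring := repeat match goal with v : V3 |- _ => destruct v as [[? ?] ?] end;
  unfold dot, cross, vscal, vadd, mk3, vx, vy, vz; simpl; ring.

Lemma dot_comm v w : dot v w = dot w v.
Proof. vring. Qed.
Lemma dot_scal_l c v w : dot (vscal c v) w = c * dot v w.
Proof. vring. Qed.
Lemma dot_scal_r c v w : dot v (vscal c w) = c * dot v w.
Proof. vring. Qed.
Lemma dot_add_l u v w : dot (vadd u v) w = dot u w + dot v w.
Proof. vring. Qed.
Lemma lagrange p q : dot (cross p q) (cross p q) = dot p p * dot q q - dot p q * dot p q.
Proof. vring. Qed.
Lemma trip1 p q : dot p (cross p q) = 0.
Proof. vring. Qed.
Lemma trip2 p q : dot q (cross p q) = 0.
Proof. vring. Qed.
Lemma parseval_gen T N v w :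
  dot v w * dot (cross T N) (cross T N) =
  dot v (cross T N) * dot w (cross T N) + dot v N * dot w N * dot T T
  - (dot v N * dot w T + dot v T * dot w N) * dot T N + dot v T * dot w T * dot N N.
Proof. vring. Qed.

Lemma parseval T N v w : dot T T = 1 -> dot N N = 1 -> dot T N = 0 ->
  dot v w = dot v T * dot w T + dot v N * dot w N + dot v (cross T N) * dot w (cross T N).
Proof.
  intros H1 H2 H3. pose proof (parseval_gen T N v w) as E. rewrite lagrange, H1, H2, H3 in E.
  nra.
Qed.

Lemma sqrt_pos_inv x : 0 < sqrt x -> 0 < x.
Proof. intros H. destruct (Rle_or_lt x 0) as [Hx|Hx]; auto. rewrite sqrt_neg_0 in H; lra. Qed.

Lemma const_dot_deriv F G x dF dG c : isV F x dF -> isV G x dG ->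
  locally x (fun v => dot (F v) (G v) = c) -> dot dF (G x) + dot (F x) dG = 0.
Proof.
  intros HF HG Hl. pose proof (isd_dot F G x dF dG HF HG) as H1.
  assert (H2 : is_derive (fun v => dot (F v) (G v)) x 0).
  { apply (is_derive_ext_loc (fun _ => c)). apply (filter_imp (fun v => dot (F v) (G v) = c)); auto.
    apply isd_const. }
  apply is_derive_unique in H1. apply is_derive_unique in H2. congruence.
Qed.

Lemma isd_id x : is_derive (fun v : R => v) x 1.
Proof. exact (is_derive_id x). Qed.

Lemma Derive_shift (f : R -> R) x c : ex_derive f (x + c) ->
  Derive (fun v => f (v + c)) x = Derive f (x + c).
Proof.
  intros H. rewrite (Derive_comp f (fun v => v + c)); auto.
  -     replace (Derive (fun v : R => v + c) x) with 1. ring. symmetry. apply Derive_isd.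
    eapply isd_val. apply (isd_plus (fun v => v) (fun _ => c)). apply isd_id. apply isd_const. ring.
  - eexists. apply (isd_plus (fun v => v) (fun _ => c)). apply isd_id. apply isd_const.
Qed.

Section Geo.
Variables (a b : R) (gam : R -> R -> V3) (theta : R -> R -> R).
Local Notation DD := (DD a b).
Local Notation Sm := (Sm a b).
Local Notation VSm := (VSm a b).
Hypothesis Hgam : VSm gam.
Hypothesis Hth : Sm theta.
Hypothesis Hg : forall t u, DD t -> 0 < speed gam t u.
Hypothesis Hk : forall t u, DD t -> 0 < kappa gam t u.

Lemma S_X : VSm (Vdu gam).
Proof. apply VSm_Vdu; auto. Qed.

Lemma dotX_pos t u : DD t -> 0 < dot (Vdu gam t u) (Vdu gam t u).
Proof. intros Ht. apply sqrt_pos_inv. apply (Hg t u Ht). Qed.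

Lemma S_g : Sm (speed gam).
Proof. exact (Sm_vnorm a b (Vdu gam) S_X dotX_pos). Qed.

Lemma S_ig : Sm (fun t u => / speed gam t u).
Proof. apply (Sm_inv a b (speed gam)). apply S_g. intros t u Ht. pose proof (Hg t u Ht); lra. Qed.

Lemma S_T : VSm (Tg gam).
Proof. exact (VSm_scal a b (fun t u => / speed gam t u) (Vdu gam) S_ig S_X). Qed.

Lemma S_K : VSm (Vds gam (Tg gam)).
Proof. exact (VSm_scal a b (fun t u => / speed gam t u) (Vdu (Tg gam)) S_ig (VSm_Vdu a b _ S_T)). Qed.

Lemma dotK_pos t u : DD t -> 0 < dot (Vds gam (Tg gam) t u) (Vds gam (Tg gam) t u).
Proof. intros Ht. apply sqrt_pos_inv. apply (Hk t u Ht). Qed.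

Lemma S_k : Sm (kappa gam).
Proof. exact (Sm_vnorm a b _ S_K dotK_pos). Qed.

Lemma S_ik : Sm (fun t u => / kappa gam t u).
Proof. apply (Sm_inv a b (kappa gam)). apply S_k. intros t u Ht. pose proof (Hk t u Ht); lra. Qed.

Lemma S_N : VSm (Ng gam).
Proof. exact (VSm_scal a b (fun t u => / kappa gam t u) _ S_ik S_K). Qed.

Lemma S_B : VSm (Bg gam).
Proof. exact (VSm_cross a b _ _ S_T S_N). Qed.

Lemma S_psi1 : Sm (psi1 gam theta).
Proof. exact (Sm_mult a b _ _ S_k (Sm_cos a b _ Hth)). Qed.
Lemma S_psi2 : Sm (psi2 gam theta).
Proof. exact (Sm_mult a b _ _ S_k (Sm_sin a b _ Hth)). Qed.

Definition Phi (t u : R) : R := dot (Vdu (Ng gam) t u) (Bg gam t u).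
Definition Psi (t u : R) : R := dot (Vdt (Ng gam) t u) (Bg gam t u).

Lemma S_Phi : Sm Phi.
Proof. exact (Sm_dot a b _ _ (VSm_Vdu a b _ S_N) S_B). Qed.
Lemma S_Psi : Sm Psi.
Proof. exact (Sm_dot a b _ _ (VSm_Vdt a b _ S_N) S_B). Qed.


Lemma unit_scal v : 0 < vnorm v -> dot (vscal (/ vnorm v) v) (vscal (/ vnorm v) v) = 1.
Proof.
  intros H. rewrite dot_scal_l, dot_scal_r.
  assert (E : dot v v = vnorm v * vnorm v).
  { unfold vnorm. rewrite sqrt_sqrt; auto. left. apply sqrt_pos_inv. exact H. }
  rewrite E. field. lra.
Qed.

Lemma scal_scal_inv c d v : c <> 0 -> d <> 0 -> v = vscal (d * c) (vscal (/ c) (vscal (/ d) v)).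
Proof. intros. destruct v as [[x y] z]. unfold vscal, mk3, vx, vy, vz; simpl. f_equal; [f_equal|]; field; auto. Qed.

Lemma F_TT t u : DD t -> dot (Tg gam t u) (Tg gam t u) = 1.
Proof. intros Ht. exact (unit_scal (Vdu gam t u) (Hg t u Ht)). Qed.
Lemma F_NN t u : DD t -> dot (Ng gam t u) (Ng gam t u) = 1.
Proof. intros Ht. exact (unit_scal (Vds gam (Tg gam) t u) (Hk t u Ht)). Qed.

Lemma iV_u F t u : VSm F -> DD t -> isV (fun v => F t v) u (Vdu F t u).
Proof. intros HF Ht. exact (isV_VD _ _ (VSm_exV_u a b F t u HF Ht)). Qed.
Lemma iV_t F t u : VSm F -> DD t -> isV (fun s => F s u) t (Vdt F t u).
Proof. intros HF Ht. exact (isV_VD _ _ (VSm_exV_t a b F t u HF Ht)). Qed.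

Lemma C_u F G c t u : VSm F -> VSm G -> (forall t u, DD t -> dot (F t u) (G t u) = c) -> DD t ->
  dot (Vdu F t u) (G t u) + dot (F t u) (Vdu G t u) = 0.
Proof.
  intros HF HG E Ht. apply (const_dot_deriv (fun v => F t v) (fun v => G t v) u _ _ c).
  apply iV_u; auto. apply iV_u; auto. apply filter_forall. intros; auto.
Qed.
Lemma C_t F G c t u : VSm F -> VSm G -> (forall t u, DD t -> dot (F t u) (G t u) = c) -> DD t ->
  dot (Vdt F t u) (G t u) + dot (F t u) (Vdt G t u) = 0.
Proof.
  intros HF HG E Ht. apply (const_dot_deriv (fun s => F s u) (fun s => G s u) t _ _ c).
  apply iV_t; auto. apply iV_t; auto. apply (filter_imp DD); [|now apply DD_loc]. intros; auto.
Qed.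

Lemma F_TdT t u : DD t -> dot (Tg gam t u) (Vdu (Tg gam) t u) = 0.
Proof. intros Ht. pose proof (C_u _ _ 1 t u S_T S_T F_TT Ht). rewrite dot_comm in H. lra. Qed.

Lemma F_TN t u : DD t -> dot (Tg gam t u) (Ng gam t u) = 0.
Proof. intros Ht. unfold Ng, Vds. rewrite !dot_scal_r, F_TdT; auto. ring. Qed.

Lemma F_dT t u : DD t -> Vdu (Tg gam) t u = vscal (speed gam t u * kappa gam t u) (Ng gam t u).
Proof. intros Ht. apply scal_scal_inv. pose proof (Hk t u Ht); lra. pose proof (Hg t u Ht); lra. Qed.

Lemma F_BB t u : DD t -> dot (Bg gam t u) (Bg gam t u) = 1.
Proof. intros Ht. unfold Bg. rewrite lagrange, F_TT, F_NN, F_TN; auto. ring. Qed.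
Lemma F_TB t u : DD t -> dot (Tg gam t u) (Bg gam t u) = 0.
Proof. intros. apply trip1. Qed.
Lemma F_NB t u : DD t -> dot (Ng gam t u) (Bg gam t u) = 0.
Proof. intros. apply trip2. Qed.

Lemma F_NdN_u t u : DD t -> dot (Ng gam t u) (Vdu (Ng gam) t u) = 0.
Proof. intros Ht. pose proof (C_u _ _ 1 t u S_N S_N F_NN Ht). rewrite dot_comm in H. lra. Qed.
Lemma F_NdN_t t u : DD t -> dot (Ng gam t u) (Vdt (Ng gam) t u) = 0.
Proof. intros Ht. pose proof (C_t _ _ 1 t u S_N S_N F_NN Ht). rewrite dot_comm in H. lra. Qed.
Lemma F_BdB_u t u : DD t -> dot (Bg gam t u) (Vdu (Bg gam) t u) = 0.
Proof. intros Ht. pose proof (C_u _ _ 1 t u S_B S_B F_BB Ht). rewrite dot_comm in H. lra. Qed.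
Lemma F_BdB_t t u : DD t -> dot (Bg gam t u) (Vdt (Bg gam) t u) = 0.
Proof. intros Ht. pose proof (C_t _ _ 1 t u S_B S_B F_BB Ht). rewrite dot_comm in H. lra. Qed.
Lemma F_dNT t u : DD t -> dot (Vdu (Ng gam) t u) (Tg gam t u) = - (speed gam t u * kappa gam t u).
Proof. intros Ht. pose proof (C_u _ _ 0 t u S_T S_N F_TN Ht).
  rewrite F_dT, dot_scal_l, F_NN in H; auto. rewrite dot_comm. lra. Qed.
Lemma F_TdB_u t u : DD t -> dot (Tg gam t u) (Vdu (Bg gam) t u) = 0.
Proof. intros Ht. pose proof (C_u _ _ 0 t u S_T S_B F_TB Ht).
  rewrite F_dT, dot_scal_l, F_NB in H; auto. lra. Qed.
Lemma F_TdB_t t u : DD t -> dot (Tg gam t u) (Vdt (Bg gam) t u) = - dot (Vdt (Tg gam) t u) (Bg gam t u).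
Proof. intros Ht. pose proof (C_t _ _ 0 t u S_T S_B F_TB Ht). lra. Qed.

Lemma F_dtPhi t u : DD t -> dt Phi t u =
  dot (Vdt (Vdu (Ng gam)) t u) (Bg gam t u) + dot (Vdu (Ng gam) t u) (Vdt (Bg gam) t u).
Proof. intros Ht. unfold dt, Phi. apply Derive_isd.
  apply (isd_dot (fun s => Vdu (Ng gam) s u) (fun s => Bg gam s u)).
  apply iV_t; auto. apply VSm_Vdu, S_N. apply iV_t; auto. apply S_B. Qed.

Lemma F_duPsi t u : DD t -> du Psi t u =
  dot (Vdu (Vdt (Ng gam)) t u) (Bg gam t u) + dot (Vdt (Ng gam) t u) (Vdu (Bg gam) t u).
Proof. intros Ht. unfold du, Psi. apply Derive_isd.
  apply (isd_dot (fun v => Vdt (Ng gam) t v) (fun v => Bg gam t v)).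
  apply iV_u; auto. apply VSm_Vdt, S_N. apply iV_u; auto. apply S_B. Qed.


Hypothesis Hflow : forall t u, DD t -> Vdt gam t u = vscal (kappa gam t u) (nu_theta gam theta t u).

Definition W (t u : R) : V3 :=
  vadd (vscal (psi1 gam theta t u) (Ng gam t u)) (vscal (psi2 gam theta t u) (Bg gam t u)).

Lemma scal_nu k c s N B : vscal k (vadd (vscal c N) (vscal s B)) = vadd (vscal (k * c) N) (vscal (k * s) B).
Proof. destruct N as [[? ?] ?]; destruct B as [[? ?] ?]; unfold vscal, vadd, mk3, vx, vy, vz; simpl; f_equal; [f_equal|]; ring. Qed.

Lemma F_flowW t u : DD t -> Vdt gam t u = W t u.
Proof. intros Ht. rewrite Hflow; auto. unfold nu_theta, W, psi1, psi2. apply scal_nu. Qed.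

Lemma F_dX t u : DD t -> Vdt (Vdu gam) t u = Vdu W t u.
Proof.
  intros Ht. rewrite (VSm_schwarz a b gam t u Hgam Ht).
  unfold Vdu, du. f_equal; apply Derive_ext; intros v; now rewrite (F_flowW t v Ht).
Qed.

Lemma F_VduW t u : DD t -> Vdu W t u =
  vadd (vadd (vscal (du (psi1 gam theta) t u) (Ng gam t u)) (vscal (psi1 gam theta t u) (Vdu (Ng gam) t u)))
       (vadd (vscal (du (psi2 gam theta) t u) (Bg gam t u)) (vscal (psi2 gam theta t u) (Vdu (Bg gam) t u))).
Proof.
  intros Ht. apply (VD_isV (fun v => W t v) u).
  apply (isV_add (fun v => vscal (psi1 gam theta t v) (Ng gam t v)) (fun v => vscal (psi2 gam theta t v) (Bg gam t v))).
  - apply (isV_scal (fun v => psi1 gam theta t v) (fun v => Ng gam t v)).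
    apply isd_ex. apply (Sm_ext_u a b). apply S_psi1. auto. apply iV_u; auto. apply S_N.
  - apply (isV_scal (fun v => psi2 gam theta t v) (fun v => Bg gam t v)).
    apply isd_ex. apply (Sm_ext_u a b). apply S_psi2. auto. apply iV_u; auto. apply S_B.
Qed.

Lemma F_dpsi2 t u : DD t -> du (psi2 gam theta) t u =
  du (kappa gam) t u * sin (theta t u) + kappa gam t u * (du theta t u * cos (theta t u)).
Proof.
  intros Ht. unfold psi2. rewrite (du_mult (kappa gam) (fun t u => sin (theta t u))).
  rewrite du_sin. reflexivity.
  apply (Sm_ext_u a b); auto. apply (Sm_ext_u a b); auto. apply S_k.
  apply (Sm_ext_u a b (fun t u => sin (theta t u))); auto. apply Sm_sin; auto.
Qed.

Lemma F_dTt t u : DD t -> Vdt (Tg gam) t u =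
  vadd (vscal (dt (fun t u => / speed gam t u) t u) (Vdu gam t u)) (vscal (/ speed gam t u) (Vdt (Vdu gam) t u)).
Proof.
  intros Ht. apply (VD_isV (fun s => vscal (/ speed gam s u) (Vdu gam s u)) t).
  apply (isV_scal (fun s => / speed gam s u) (fun s => Vdu gam s u)).
  apply isd_ex. apply (Sm_ext_t a b (fun t u => / speed gam t u)). apply S_ig. auto.
  apply iV_t; auto. apply S_X.
Qed.

Definition Gint (t u : R) : R :=
  (psi1 gam theta t u * psi3 gam theta t u * kappa gam t u
   + psi2 gam theta t u * ds gam (kappa gam) t u) * speed gam t u.

Lemma KEY t u : DD t -> dt Phi t u = du Psi t u + Gint t u.
Proof.
  intros Ht.
  pose proof (Hg t u Ht) as Hg0. pose proof (Hk t u Ht) as Hk0.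
  rewrite F_dtPhi, F_duPsi; auto.
  rewrite (VSm_schwarz a b (Ng gam) t u S_N Ht).
  pose proof (parseval (Tg gam t u) (Ng gam t u) (Vdu (Ng gam) t u) (Vdt (Bg gam) t u)
     (F_TT t u Ht) (F_NN t u Ht) (F_TN t u Ht)) as P1.
  pose proof (parseval (Tg gam t u) (Ng gam t u) (Vdt (Ng gam) t u) (Vdu (Bg gam) t u)
     (F_TT t u Ht) (F_NN t u Ht) (F_TN t u Ht)) as P2.
  change (cross (Tg gam t u) (Ng gam t u)) with (Bg gam t u) in P1, P2.
  rewrite (dot_comm (Vdu (Bg gam) t u) (Tg gam t u)), F_TdB_u,
          (dot_comm (Vdt (Ng gam) t u) (Ng gam t u)), F_NdN_t,
          (dot_comm (Vdu (Bg gam) t u) (Bg gam t u)), F_BdB_u in P2; auto.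
  rewrite F_dNT, (dot_comm (Vdt (Bg gam) t u) (Tg gam t u)), F_TdB_t,
          (dot_comm (Vdu (Ng gam) t u) (Ng gam t u)), F_NdN_u,
          (dot_comm (Vdt (Bg gam) t u) (Bg gam t u)), F_BdB_t in P1; auto.
  rewrite P1, P2. clear P1 P2.
  rewrite F_dTt, dot_add_l, !dot_scal_l, F_dX, F_VduW, !dot_add_l, !dot_scal_l, F_NB, F_BB; auto.
  assert (XB : dot (Vdu gam t u) (Bg gam t u) = 0).
  { assert (E : Vdu gam t u = vscal (speed gam t u) (Tg gam t u)).
    { unfold Tg, Vds. generalize (Vdu gam t u) as v. intros [[x y] z].
      unfold vscal, mk3, vx, vy, vz; simpl. f_equal; [f_equal|]; field; lra. }
    rewrite E, dot_scal_l, F_TB; auto. ring. }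
  rewrite XB, F_dpsi2; auto.
  unfold Gint, psi3, psi1, psi2, tau, ds, Vds, Phi. rewrite dot_scal_l.
  rewrite (dot_comm (Vdu (Bg gam) t u) (Bg gam t u)), F_BdB_u; auto.
  match goal with |- @eq ?T _ _ => idtac T end. field. lra.
Qed.

End Geo.

Lemma cont2_u f t u : cont2 f t u -> continuous (fun v => f t v) u.
Proof. intros H.
  exact (continuous_comp_2 (fun _ : R => t) (fun v : R => v) f u (continuous_const t u) (continuous_id u) H).
Qed.
Lemma cont2_t f t u : cont2 f t u -> continuous (fun s => f s u) t.
Proof. intros H.
  exact (continuous_comp_2 (fun s : R => s) (fun _ : R => u) f t (continuous_id t) (continuous_const u t) H).
Qed.

Lemma IZR_small z : -1 < IZR z < 1 -> z = 0%Z.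
Proof. intros [H1 H2]. apply lt_IZR in H1. apply lt_IZR in H2. lia. Qed.

Section Per.
Variables (a b : R) (gam : R -> R -> V3) (theta : R -> R -> R).
Local Notation DD := (DD a b).
Local Notation Sm := (Sm a b).
Local Notation VSm := (VSm a b).
Hypothesis Hgam : VSm gam.
Hypothesis Hth : Sm theta.
Hypothesis Hg : forall t u, DD t -> 0 < speed gam t u.
Hypothesis Hk : forall t u, DD t -> 0 < kappa gam t u.
Hypothesis Hper : forall t u, DD t -> gam t (u + 2 * PI) = gam t u.

Definition VPer (F : R -> R -> V3) := forall t u, DD t -> F t (u + 2 * PI) = F t u.

Lemma VPer_Vdu F : VSm F -> VPer F -> VPer (Vdu F).
Proof.
  intros HF HP t u Ht. destruct (VSm_exV_u a b F t (u + 2 * PI) HF Ht) as [E1 [E2 E3]].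
  unfold Vdu, du. f_equal; rewrite <- Derive_shift; auto; apply Derive_ext; intros v; now rewrite (HP t v Ht).
Qed.

Lemma VPer_Vdt F : VPer F -> VPer (Vdt F).
Proof.
  intros HP t u Ht. unfold Vdt, dt. f_equal; apply Derive_ext_loc;
  apply (filter_imp DD); [| apply DD_loc; auto| | apply DD_loc; auto | | apply DD_loc; auto];
  intros s Hs; now rewrite (HP s u Hs).
Qed.

Lemma P_X : VPer (Vdu gam).
Proof. apply VPer_Vdu; auto. Qed.
Lemma P_g t u : DD t -> speed gam t (u + 2 * PI) = speed gam t u.
Proof. intros Ht. unfold speed. now rewrite P_X. Qed.
Lemma P_T : VPer (Tg gam).
Proof. intros t u Ht. unfold Tg, Vds. now rewrite P_g, P_X. Qed.
Lemma P_K : VPer (Vds gam (Tg gam)).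
Proof. intros t u Ht. unfold Vds at 1. rewrite P_g, (VPer_Vdu (Tg gam)); auto. apply (S_T a b gam Hgam Hg). apply P_T. Qed.
Lemma P_k t u : DD t -> kappa gam t (u + 2 * PI) = kappa gam t u.
Proof. intros Ht. unfold kappa. now rewrite P_K. Qed.
Lemma P_N : VPer (Ng gam).
Proof. intros t u Ht. unfold Ng. now rewrite P_k, P_K. Qed.
Lemma P_B : VPer (Bg gam).
Proof. intros t u Ht. unfold Bg. now rewrite P_T, P_N. Qed.
Lemma P_Psi t u : DD t -> Psi gam t (u + 2 * PI) = Psi gam t u.
Proof. intros Ht. unfold Psi. rewrite P_B, (VPer_Vdt (Ng gam)); auto. apply P_N. Qed.

End Per.

Section Main.
Variables (a b : R) (gam : R -> R -> V3) (theta : R -> R -> R).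
Local Notation DD := (DD a b).
Local Notation Sm := (Sm a b).
Local Notation VSm := (VSm a b).
Hypothesis Hgam : VSm gam.
Hypothesis Hth : Sm theta.
Hypothesis Hg : forall t u, DD t -> 0 < speed gam t u.
Hypothesis Hk : forall t u, DD t -> 0 < kappa gam t u.
Hypothesis Hflow : forall t u, DD t -> Vdt gam t u = vscal (kappa gam t u) (nu_theta gam theta t u).
Hypothesis Hper : forall t u, DD t -> gam t (u + 2 * PI) = gam t u.
Hypothesis Hpth : forall t u, DD t -> exists k : Z, theta t (u + 2 * PI) = theta t u + 2 * PI * IZR k.

Lemma exRI f t : Sm f -> DD t -> ex_RInt (fun v => f t v) 0 (2 * PI).
Proof. intros Hf Ht. apply (ex_RInt_continuous (V := R_CompleteNormedModule)). intros z _. apply cont2_u. apply (Sm_cont a b); auto. Qed.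

Lemma tau_Phi s u : DD s -> tau gam s u * speed gam s u = Phi gam s u.
Proof. intros Hs. pose proof (Hg s u Hs). unfold tau, Vds, Phi. rewrite dot_scal_l. field. lra. Qed.

Lemma psi3_Phi s u : DD s -> psi3 gam theta s u * speed gam s u = Phi gam s u + du theta s u.
Proof. intros Hs. pose proof (Hg s u Hs). unfold psi3, tau, ds, Vds, Phi. rewrite dot_scal_l. field. lra. Qed.

Lemma dPhi_int t : DD t ->
  is_derive (fun s => RInt (fun u => Phi gam s u) 0 (2 * PI)) t (RInt (fun u => Gint gam theta t u) 0 (2 * PI)).
Proof.
  intros Ht.
  pose proof (S_Phi a b gam Hgam Hg Hk) as SP.
  pose proof (S_Psi a b gam Hgam Hg Hk) as SQ.
  eapply (is_derive_ext _ _ t). { intros s. reflexivity. }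
  assert (H := is_derive_RInt_param (Phi gam) 0 (2 * PI) t).
  eapply isd_val. apply H.
  - apply (filter_imp DD); [|apply DD_loc; auto]. intros s Hs v _. apply (Sm_ext_t a b); auto.
  - intros v _. apply continuity_2d_pt_filterlim. apply (Sm_cont a b (dt (Phi gam))); auto. apply Sm_dt; auto.
  - apply (filter_imp DD); [|apply DD_loc; auto]. intros s Hs. apply (exRI (Phi gam)); auto.
  - clear H.
    assert (E1 : ex_RInt (fun v => du (Psi gam) t v) 0 (2 * PI)) by (apply (exRI (du (Psi gam))); auto; apply Sm_du; auto).
    assert (E2 : ex_RInt (fun v => dt (Phi gam) t v) 0 (2 * PI)) by (apply (exRI (dt (Phi gam))); auto; apply Sm_dt; auto).
    assert (E3 : ex_RInt (fun v => Gint gam theta t v) 0 (2 * PI)).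
    { apply (ex_RInt_ext (V := R_NormedModule) (fun v => dt (Phi gam) t v - du (Psi gam) t v)).
      intros v _. rewrite (KEY a b gam theta Hgam Hth Hg Hk Hflow t v Ht).
      assert (Hr : forall x y : R, x + y - x = y) by (intros; ring). apply Hr.
      exact (ex_RInt_minus (V := R_NormedModule) (fun v => dt (Phi gam) t v) (fun v => du (Psi gam) t v) 0 (2 * PI) E2 E1). }
    transitivity (RInt (fun v => du (Psi gam) t v + Gint gam theta t v) 0 (2 * PI)).
    + apply (RInt_ext (V := R_CompleteNormedModule)). intros v _. apply (KEY a b gam theta Hgam Hth Hg Hk Hflow t v Ht).
    + transitivity (plus (RInt (fun v => du (Psi gam) t v) 0 (2 * PI)) (RInt (fun v => Gint gam theta t v) 0 (2 * PI))).
      * exact (RInt_plus (V := R_CompleteNormedModule) _ _ 0 (2 * PI) E1 E3).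
      * assert (RD : RInt (fun v => du (Psi gam) t v) 0 (2 * PI) = 0).
        { transitivity (Psi gam t (2 * PI) - Psi gam t 0).
          - apply (RInt_Derive (fun v => Psi gam t v)).
            + intros v _. apply (Sm_ext_u a b); auto.
            + intros v _. apply (cont2_u (du (Psi gam))). apply (Sm_cont a b); auto. apply Sm_du; auto.
          - rewrite <- (Rplus_0_l (2 * PI)) at 1. rewrite (P_Psi a b gam Hgam Hg Hper t 0 Ht). apply Rminus_diag_eq. reflexivity. }
        rewrite RD. exact (Rplus_0_l _).
Qed.

Lemma h_const t : DD t ->
  is_derive (fun s => theta s (2 * PI) - theta s 0) t 0.
Proof.
  intros Ht.
  set (h := fun s => theta s (2 * PI) - theta s 0).
  assert (Hc : continuous h t).
  { unfold h. apply (continuous_plus (fun s => theta s (2 * PI)) (fun s => - theta s 0)).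
    apply (cont2_t theta). apply (Sm_cont a b); auto.
    apply (continuous_opp (fun s => theta s 0)). apply (cont2_t theta). apply (Sm_cont a b); auto. }
  assert (Hpos : 0 < 2 * PI) by (pose proof PI_RGT_0; lra).
  assert (L : locally t (fun s => ball (h t) (mkposreal _ Hpos) (h s))).
  { apply Hc. apply locally_ball. }
  apply (is_derive_ext_loc (fun _ => h t)).
  - apply (filter_imp (fun s => DD s /\ ball (h t) (mkposreal _ Hpos) (h s))).
    + intros s [Hs Hb]. simpl in Hb. unfold AbsRing_ball, abs, minus, plus, opp in Hb; simpl in Hb.
      destruct (Hpth s 0 Hs) as [ks Eks]. destruct (Hpth t 0 Ht) as [kt Ekt].
      rewrite Rplus_0_l in Eks, Ekt.
      assert (Ehs : h s = 2 * PI * IZR ks) by (unfold h; lra).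
      assert (Eht : h t = 2 * PI * IZR kt) by (unfold h; lra).
      rewrite Ehs, Eht in Hb. apply Rabs_lt_between in Hb.
      assert (Hz : (ks - kt)%Z = 0%Z).
      { apply IZR_small. rewrite minus_IZR.
        unfold minus, plus, opp in Hb; simpl in Hb.
        destruct Hb as [Hb1 Hb2]. split; apply (Rmult_lt_reg_l (2 * PI)); auto; lra. }
      apply Zminus_eq in Hz. subst. rewrite Eht, <- Ehs. reflexivity.
    + apply filter_and; auto. apply DD_loc; auto.
  - apply isd_const.
Qed.

Lemma MAIN t : DD t ->
  is_derive (fun s => curve_int gam (tau gam) s) t (RInt (fun u => Gint gam theta t u) 0 (2 * PI)) /\
  is_derive (fun s => curve_int gam (psi3 gam theta) s) t (RInt (fun u => Gint gam theta t u) 0 (2 * PI)).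
Proof.
  intros Ht. split.
  - apply (is_derive_ext_loc (fun s => RInt (fun u => Phi gam s u) 0 (2 * PI))).
    + apply (filter_imp DD); [|apply DD_loc; auto]. intros s Hs. unfold curve_int.
      apply RInt_ext. intros v _. symmetry. apply tau_Phi; auto.
    + apply dPhi_int; auto.
  - apply (is_derive_ext_loc (fun s => RInt (fun u => Phi gam s u) 0 (2 * PI) + (theta s (2 * PI) - theta s 0))).
    + apply (filter_imp DD); [|apply DD_loc; auto]. intros s Hs. unfold curve_int.
      pose proof (S_Phi a b gam Hgam Hg Hk) as SP.
      symmetry.
      transitivity (RInt (fun v => Phi gam s v + du theta s v) 0 (2 * PI)).
      { apply (RInt_ext (V := R_CompleteNormedModule)). intros v _. apply psi3_Phi; auto. }
      transitivity (plus (RInt (fun v => Phi gam s v) 0 (2 * PI)) (RInt (fun v => du theta s v) 0 (2 * PI))).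
      { exact (RInt_plus (V := R_CompleteNormedModule) _ _ 0 (2 * PI) (exRI (Phi gam) s SP Hs) (exRI (du theta) s (Sm_du a b _ Hth) Hs)). }
      assert (RD : RInt (fun v => du theta s v) 0 (2 * PI) = theta s (2 * PI) - theta s 0).
      { apply (RInt_Derive (fun v => theta s v)).
        + intros v _. apply (Sm_ext_u a b); auto.
        + intros v _. apply (cont2_u (du theta)). apply (Sm_cont a b); auto. apply Sm_du; auto. }
      rewrite RD. reflexivity.
    + eapply isd_val. apply (isd_plus (fun s => RInt (fun u => Phi gam s u) 0 (2 * PI)) (fun s => theta s (2 * PI) - theta s 0)).
      apply dPhi_int; auto. apply h_const; auto. ring.
Qed.
End Main.

Theorem mainTheorem9
  (tbar : R) (gam : R -> R -> V3) (theta upsilon : R -> R -> R) :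
  0 < tbar ->
  (* smoothness of the solution on (0, tbar) x S^1 *)
  Vsmooth_on (fun t _ => 0 < t < tbar) gam ->
  smooth_on (fun t _ => 0 < t < tbar) theta ->
  (* closed curves: 2 PI-periodic parametrization; theta is an S^1-valued
     angle, represented by a real lift *)
  (forall t u, 0 < t < tbar -> gam t (u + 2 * PI) = gam t u) ->
  (forall t u, 0 < t < tbar ->
     exists k : Z, theta t (u + 2 * PI) = theta t u + 2 * PI * IZR k) ->
  (* regular curves with positive curvature *)
  (forall t u, 0 < t < tbar -> 0 < speed gam t u) ->
  (forall t u, 0 < t < tbar -> 0 < kappa gam t u) ->
  (* framed curvature flow *)
  (forall t u, 0 < t < tbar ->
     Vdt gam t u = vscal (kappa gam t u) (nu_theta gam theta t u)) ->
  (forall t u, 0 < t < tbar -> dt theta t u = upsilon t u) ->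
  forall t, 0 < t < tbar ->
    let rhs := curve_int gam
      (fun s u => psi1 gam theta s u * psi3 gam theta s u * kappa gam s u
                  + psi2 gam theta s u * ds gam (kappa gam) s u) t in
    is_derive (fun s => curve_int gam (tau gam) s) t rhs /\
    is_derive (fun s => curve_int gam (psi3 gam theta) s) t rhs.
Proof.
  intros H0 [Hx [Hy Hz]] Hth Hpg Hpth Hg Hk Hflow Hups t Ht rhs.
  exact (MAIN 0 tbar gam theta
    (conj (smooth_Sm 0 tbar _ Hx) (conj (smooth_Sm 0 tbar _ Hy) (smooth_Sm 0 tbar _ Hz)))
    (smooth_Sm 0 tbar _ Hth) Hg Hk Hflow Hpg Hpth t Ht).
Qed.
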